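(* Let $\alpha,\beta\in\mathbb{R}$ with $\alpha\ne0$, let $\{c_k\}_{k\ge0}$ be a sequence of nonzero real numbers, and set $q_k(x)=c_k(\alpha x+\beta)^k$. Let $\{\gamma_n\}_{n\ge0}$ be real numbers and let $T:\mathbb{R}[x]\to\mathbb{R}[x]$ be the linear operator with $T[q_n]=\gamma_nq_n$ for all $n\ge0$. Writing $T=\sum_{k\ge0}Q_k(x)D^k$, we have $Q_0=\gamma_0$ and for every $k\ge1$ \[Q_k(x)=\frac{(-1)^k(\alpha x+\beta)^k}{k!\,\alpha^k}\Big(\gamma_0-\sum_{j=1}^k\binom{k}{j}(-1)^{j+1}\gamma_j\Big).\] Consequently each $Q_k$ is either identically zero or of degree exactly $k$, and $T$ is monotone.
   Context: $D=\frac{d}{dx}$. Every linear operator $T:\mathbb{R}[x]\to\mathbb{R}[x]$ can be written uniquely as $T=\sum_{k=0}^\infty Q_k(x)D^k$ with $Q_k\in\mathbb{R}[x]$ (meaning $T[p]=\sum_kQ_kD^k[p]$ for all polynomials $p$). $T$ is monotone if $\deg Q_k\le\deg Q_l$ whenever $k<l$ and $Q_k\not\equiv0$, $Q_l\not\equiv0$. *)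

(* Defs.v *)
From HB Require Import structures.
From mathcomp Require Import all_boot all_order all_algebra.
Set Implicit Arguments. Unset Strict Implicit. Unset Printing Implicit Defensive.
Import Order.TTheory GRing.Theory Num.Theory.
Local Open Scope ring_scope.

(* T = sum_k Q_k D^k : T[p] = sum_k Q_k * p^(k); the sum is finite since
   p^(k) = 0 for k >= size p. *)
Definition diff_op_rep (R : realFieldType) (T : {poly R} -> {poly R})
  (Q : nat -> {poly R}) : Prop :=
  forall p : {poly R}, T p = \sum_(k < size p) Q k * p^`(k).

(* monotone: deg Q_k <= deg Q_l whenever k < l and Q_k, Q_l nonzero
   (deg p = (size p).-1 for p <> 0). *)
Definition monotone_rep (R : realFieldType) (Q : nat -> {poly R}) : Prop :=
  forall k l : nat, (k < l)%N -> Q k != 0 -> Q l != 0 ->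
    ((size (Q k)).-1 <= (size (Q l)).-1)%N.

(* Main.v *)
From HB Require Import structures.
From mathcomp Require Import all_boot all_order all_algebra ring.
Set Implicit Arguments. Unset Strict Implicit. Unset Printing Implicit Defensive.
Import Order.TTheory GRing.Theory Num.Theory.
Local Open Scope ring_scope.
Require Import Defs.

Section S.
Variables (R : realFieldType) (alpha beta : R).
Hypothesis Ha : alpha != 0.
Let L : {poly R} := alpha *: 'X + beta%:P.

Lemma LE : L = alpha%:P * 'X + beta%:P.
Proof. by rewrite /L mul_polyC. Qed.

Lemma sizeL : size L = 2%N.
Proof. by rewrite LE size_MXaddC polyC_eq0 (negbTE Ha) /= size_polyC Ha. Qed.

Lemma leadL : lead_coef L = alpha.
Proof.
rewrite lead_coefE sizeL /= LE coefD coefMX coefC /= coefC /=; by rewrite addr0.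
Qed.

Lemma L_neq0 : L != 0.
Proof. by rewrite -size_poly_eq0 sizeL. Qed.

Lemma sizeLn n : size (L ^+ n) = n.+1.
Proof.
have H0 : (0 < size (L ^+ n))%N.
  by rewrite lt0n size_poly_eq0 expf_neq0 //; exact: L_neq0.
by rewrite -(prednK H0) size_exp sizeL mul1n.
Qed.

Lemma leadLn n : lead_coef (L ^+ n) = alpha ^+ n.
Proof. by rewrite lead_coef_exp leadL. Qed.

Lemma derivL : L^`() = alpha%:P.
Proof. by rewrite /L derivD derivZ derivX derivC addr0 alg_polyC. Qed.

Lemma derivnLn n k : (L ^+ n)^`(k) = ((n ^_ k)%:R * alpha ^+ k) *: L ^+ (n - k).
Proof.
elim: k => [|k IH]; first by rewrite derivn0 ffactn0 expr0 mulr1 scale1r subn0.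
rewrite derivnS IH derivZ deriv_exp derivL ffactnSr natrM exprS.
rewrite subnS -!mul_polyC !polyCM -mulr_natr !polyC_natr.
set P := L ^+ _.-1. ring.
Qed.



Definition Dd (g : nat -> R) k := \sum_(j < k.+1) ('C(k, j))%:R * (-1) ^+ (k + j) * g j.

Lemma Dd_ext g k : Dd g k = \sum_(j < k.+2) ('C(k, j))%:R * (-1) ^+ (k + j) * g j.
Proof. by rewrite big_ord_recr /= bin_small // mul0r mul0r addr0. Qed.

Lemma Dstep g k : Dd g k.+1 + Dd g k = Dd (fun j => g j.+1) k.
Proof.
rewrite (Dd_ext g k) /Dd big_ord_recl [in X in _ + X]big_ord_recl /=.
rewrite !bin0 !mul1r addn0.
under eq_bigr => j _ do rewrite binS natrD /bump /= !add1n !addSn !addnS !exprS !mulN1r opprK mulrDl.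
under eq_bigr => j _ do rewrite mulrDl.
rewrite big_split /=.
under [X in _ + (_ + X)]eq_bigr => j _ do rewrite /bump /= add1n addnS exprS mulN1r mulrN mulNr.
rewrite sumrN addn0 exprS mulN1r.
set A := \sum_(i < k.+1) _. set B := \sum_(i < k.+1) _.
rewrite /B; set B' := \sum_(i < k.+1) _. 
ring.
Qed.

Lemma newton n : forall g : nat -> R, \sum_(k < n.+1) ('C(n, k))%:R * Dd g k = g n.
Proof.
elim: n => [|n IH] g.
  by rewrite big_ord1 bin0 mul1r /Dd big_ord1 bin0 mul1r expr0 mul1r.
rewrite -(IH (fun j => g j.+1)).
rewrite big_ord_recl /=.
under eq_bigr => k _ do rewrite /bump /= add1n binS natrD mulrDl.
rewrite big_split /= addrA.
have -> : 'C(n.+1, 0)%:R * Dd g 0 + \sum_(i < n.+1) ('C(n, i.+1))%:R * Dd g i.+1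
   = \sum_(k < n.+1) ('C(n, k))%:R * Dd g k.
  rewrite [RHS]big_ord_recl [in RHS](_ : \sum_(i < n) _ = \sum_(i < n.+1) ('C(n, i.+1))%:R * Dd g i.+1).
    by rewrite !bin0.
  by rewrite big_ord_recr /= bin_small // mul0r addr0.
rewrite -big_split /=; apply: eq_bigr => k _.
by rewrite -Dstep mulrDr addrC.
Qed.


Variables (gamma c : nat -> R) (T : {linear {poly R} -> {poly R}}).
Hypothesis Hc : forall k, c k != 0.
Hypothesis HT : forall n, T (c n *: (alpha *: 'X + beta%:P) ^+ n)
             = gamma n *: (c n *: (alpha *: 'X + beta%:P) ^+ n).

Definition Acoef k := (-1) ^+ k / (k`!%:R * alpha ^+ k)
               * (gamma 0%N - \sum_(1 <= j < k.+1)
                     'C(k, j)%:R * (-1) ^+ j.+1 * gamma j).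
Definition Q0 k := Acoef k *: L ^+ k.

Lemma AcoefE k : Acoef k = Dd gamma k / (k`!%:R * alpha ^+ k).
Proof.
rewrite /Acoef mulrAC; congr (_ * _).
rewrite /Dd big_ord_recl /= bin0 mul1r addn0 big_add1 /= big_mkord mulrBr mulr_sumr.
rewrite -sumrN; congr (_ + _); apply: eq_bigr => j _.
rewrite /bump /= add1n addnS !exprS exprD !mulN1r. ring.
Qed.

Lemma TLn n : T (L ^+ n) = gamma n *: L ^+ n.
Proof.
have := HT n; rewrite linearZ /= scalerA mulrC -scalerA => /(scalerI (Hc n)).
by [].
Qed.

Lemma key n : \sum_(k < n.+1) Q0 k * (L ^+ n)^`(k) = gamma n *: L ^+ n.
Proof.
transitivity (\sum_(k < n.+1) (('C(n, k))%:R * Dd gamma k) *: L ^+ n).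
  apply: eq_bigr => k _.
  have hk : (k <= n)%N by rewrite -ltnS.
  rewrite /Q0 derivnLn -scalerAl -scalerAr scalerA -exprD subnKC //.
  congr (_ *: _).
  rewrite AcoefE -bin_ffact natrM.
  have h1 : (k`!%:R : R) != 0 by rewrite pnatr_eq0 -lt0n fact_gt0.
  have h2 : alpha ^+ k != 0 by rewrite expf_neq0.
  field.
  by rewrite h1 h2.
by rewrite -(@scaler_suml _ _ (L ^+ n)) newton.
Qed.

Lemma exist_rep N : forall p : {poly R}, (size p <= N)%N ->
  T p = \sum_(k < N) Q0 k * p^`(k).
Proof.
elim: N => [|N IH] p hp.
  move: hp; rewrite size_poly_leq0 => /eqP ->.
  by rewrite linear0 big_ord0.
set a := p`_N / alpha ^+ N.
set r := p - a *: L ^+ N.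
have hr : (size r <= N)%N.
  apply/leq_sizeP => j hj.
  rewrite /r coefB coefZ.
  move: hj; rewrite leq_eqVlt => /orP [/eqP <-|hj].
    have := leadLn N; rewrite lead_coefE sizeLn /= => ->.
    rewrite /a mulfVK ?subrr //; exact: expf_neq0.
  rewrite !nth_default ?mulr0 ?subrr //.
    by rewrite sizeLn.
  by apply: leq_trans hp _.
have -> : p = r + a *: L ^+ N by rewrite /r subrK.
rewrite linearD linearZ /= TLn IH //.
under [RHS]eq_bigr => k _ do rewrite derivnD derivnZ mulrDr -scalerAr.
rewrite big_split /= -scaler_sumr key scalerA mulrC -scalerA; congr (_ + _).
by rewrite big_ord_recr /= (derivn_poly0 hr) mulr0 addr0.
Qed.

Lemma uniq_rep (Q : nat -> {poly R}) : diff_op_rep T Q -> forall k, Q k = Q0 k.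
Proof.
move=> HQ k; elim/ltn_ind: k => k IH.
have E := HQ (L ^+ k).
rewrite (exist_rep (leqnn _)) sizeLn !big_ord_recr /= in E.
have EQ : \sum_(i < k) Q i * (L ^+ k)^`(i) = \sum_(i < k) Q0 i * (L ^+ k)^`(i).
  by apply: eq_bigr => i _; rewrite IH.
rewrite EQ in E.
move/addrI: E => E.
have hd : (L ^+ k)^`(k) != 0.
  rewrite derivnLn subnn expr0 scaler_eq0 negb_or oner_eq0 andbT ffactnn mulf_neq0 ?expf_neq0 //.
  by rewrite pnatr_eq0 -lt0n fact_gt0.
by apply: (mulIf hd); rewrite E.
Qed.

Lemma sizeQ0 k : Q0 k = 0 \/ size (Q0 k) = k.+1.
Proof.
rewrite /Q0; have [->|h] := eqVneq (Acoef k) 0; first by left; rewrite scale0r.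
by right; rewrite size_scale // sizeLn.
Qed.
End S.

Theorem mainTheorem7 (R : realFieldType) (alpha beta : R) (c gamma : nat -> R)
  (T : {linear {poly R} -> {poly R}}) :
  alpha != 0 ->
  (forall k, c k != 0) ->
  (forall n, T (c n *: (alpha *: 'X + beta%:P) ^+ n)
             = gamma n *: (c n *: (alpha *: 'X + beta%:P) ^+ n)) ->
  (exists Q : nat -> {poly R}, diff_op_rep T Q) /\
  (forall Q : nat -> {poly R}, diff_op_rep T Q ->
     Q 0%N = (gamma 0%N)%:P /\
     (forall k : nat, (1 <= k)%N ->
        Q k = ((-1) ^+ k / (k`!%:R * alpha ^+ k)
               * (gamma 0%N - \sum_(1 <= j < k.+1)
                     'C(k, j)%:R * (-1) ^+ j.+1 * gamma j))
              *: (alpha *: 'X + beta%:P) ^+ k) /\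
     (forall k : nat, Q k = 0 \/ size (Q k) = k.+1) /\
     monotone_rep Q).
Proof.
move=> Ha Hc HT.
split.
  exists (Q0 alpha beta gamma); move=> p; exact: (exist_rep Ha Hc HT (leqnn _)).
move=> Q HQ.
have U := uniq_rep Ha Hc HT HQ.
have SZ : forall k, Q k = 0 \/ size (Q k) = k.+1.
  by move=> k; rewrite U; apply: sizeQ0.
split.
  rewrite U /Q0 /Acoef expr0 big_geq // subr0 !expr0 fact0 mulr1 invr1 mul1r.
  by rewrite mul1r alg_polyC.
split; first by move=> k _; rewrite U.
split=> //.
move=> k l hkl hk hl.
case: (SZ k) => [h|->]; first by rewrite h eqxx in hk.
case: (SZ l) => [h|->]; first by rewrite h eqxx in hl.
by rewrite /= ltnW.
Qed.
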